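(* Consider a combinatorial auction on a finite item set $X$ using the VCG rules. Let $u_1,\dots,u_k$ be the (reported) valuations of the other bidders and let $u=u_1\vee\dots\vee u_k$ be their combined valuation; suppose $u$ is submodular. Let a player have true valuation $v$. Suppose that instead of bidding under a single identity the player places bids under two identities with valuations $v_1$ and $v_2$, receiving bundles $S_1,S_2$ and paying VCG payments $p_1,p_2$ in that auction. Then $v(S_1\cup S_2)-p_1-p_2$ is at most the utility the player obtains by bidding truthfully $v$ under a single identity; that is, the player cannot benefit from placing false-name bids.
   Context: A valuation on $X$ is a function $w:2^X\to\mathbb{R}_{\ge 0}$ with $w(\emptyset)=0$ and monotone under inclusion. For valuations $w_1,w_2$, $(w_1\vee w_2)(S)=\max_{T\subseteq S}(w_1(T)+w_2(S\setminus T))$; this is associative, and $w_1\vee\dots\vee w_k(S)$ is the maximum of $\sum_i w_i(T_i)$ over partitions of $S$ into $T_1,\dots,T_k$. A valuation $w$ is submodular if $w(A)+w(B)\ge w(A\cup B)+w(A\cap B)$ for all $A,B\subseteq X$. VCG rules: given reported valuations of all bidders, the items are allocated by an allocation (partition of $X$) maximizing the sum of reported valuations; a bidder $i$ receiving $S_i$ pays $\max\sum_{j\ne i}w_j(T_j)-\sum_{j\ne i}w_j(S_j)$, where the max is over allocations of $X$ among the bidders other than $i$ (equivalently, with an optimal allocation, $W_{-i}(X)-W_{-i}(X\setminus S_i)$ where $W_{-i}$ is the OR of the other bidders' valuations). A bidder's utility is his true value of the items received minus the payments made. *)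

(* Defs.v *)
From mathcomp Require Import all_boot all_order all_algebra.
Set Implicit Arguments. Unset Strict Implicit. Unset Printing Implicit Defensive.
Import Order.TTheory GRing.Theory Num.Theory.
Local Open Scope ring_scope.

Section Auction.
Variable R : realFieldType.
Variable X : finType.

Definition is_valuation (w : {set X} -> R) : Prop :=
  [/\ w set0 = 0, (forall S : {set X}, 0 <= w S) & (forall S T : {set X}, S \subset T -> w S <= w T)].

Definition submodular (w : {set X} -> R) : Prop :=
  forall A B : {set X}, w (A :|: B) + w (A :&: B) <= w A + w B.

(* OR of k valuations: max over partitions of S into T_1..T_k
   (a partition is encoded by a labelling P of the items). *)
Definition or_val (k : nat) (u : 'I_k -> {set X} -> R) (S : {set X}) : R :=
  \big[Num.max/0]_(P : {ffun X -> 'I_k})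
     \sum_(i < k) u i [set x in S | P x == i].

Definition alloc (I : finType) := {ffun X -> I}.

Definition bundle (I : finType) (a : alloc I) (i : I) : {set X} :=
  [set x | a x == i].

Definition welfare (I : finType) (w : I -> {set X} -> R) (a : alloc I) : R :=
  \sum_(i : I) w i (bundle a i).

Definition vcg_optimal (I : finType) (w : I -> {set X} -> R) (a : alloc I) : Prop :=
  forall b : alloc I, welfare w b <= welfare w a.

Definition vcg_payment (I : finType) (w : I -> {set X} -> R) (a : alloc I) (i : I) : R :=
  \big[Num.max/0]_(b : alloc I | [forall x, b x != i])
      (\sum_(j | j != i) w j (bundle b j))
  - \sum_(j | j != i) w j (bundle a j).

Definition truthful_profile (k : nat) (u : 'I_k -> {set X} -> R) (v : {set X} -> R)
  (i : option 'I_k) : {set X} -> R :=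
  match i with Some j => u j | None => v end.

Definition falsename_profile (k : nat) (u : 'I_k -> {set X} -> R)
  (v1 v2 : {set X} -> R) (i : ('I_k + bool)%type) : {set X} -> R :=
  match i with inl j => u j | inr false => v1 | inr true => v2 end.

End Auction.

(* Main.v *)
Require Import Defs.
From mathcomp Require Import all_boot all_order all_algebra.
From mathcomp Require Import lra.
Import Order.TTheory GRing.Theory Num.Theory.
Local Open Scope ring_scope.
Set Implicit Arguments. Unset Strict Implicit.

Section H.
Variable R : realFieldType.
Variable X : finType.

Lemma sum_option (I : finType) (P : pred (option I)) (F : option I -> R) :
  \sum_(i | P i) F i = (if P None then F None else 0) + \sum_(j | P (Some j)) F (Some j).
Proof.
rewrite ![index_enum _]unlock [@Finite.enum in LHS]unlock /= /option_enum big_cons big_map.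
by case: (P None); rewrite ?add0r.
Qed.

Lemma sum_bool_ne (I : finType) (bb : bool) (F : bool -> R) :
  \sum_(i : bool | inr i != (inr bb : (I + bool)%type)) F i = F (~~ bb).
Proof. by case: bb; rewrite big_mkcond big_bool /= ?addr0 ?add0r. Qed.

Lemma or_val_ge k (u : 'I_k -> {set X} -> R) (S : {set X}) (P : {ffun X -> 'I_k}) :
  \sum_i u i [set x in S | P x == i] <= or_val u S.
Proof. exact: (le_bigmax _ (fun P : {ffun X -> 'I_k} => \sum_i u i [set x in S | P x == i])). Qed.

Lemma or_val_ge0 k (u : 'I_k -> {set X} -> R) (S : {set X}) : 0 <= or_val u S.
Proof.
rewrite /or_val; elim/big_rec: _ => // i y _ hy.
by rewrite le_max hy orbT.
Qed.

Lemma sum_le_or_val k (u : 'I_k -> {set X} -> R) (hu : forall i, is_valuation (u i))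
  (S : {set X}) (Q : 'I_k -> {set X}) (g : X -> option 'I_k) :
  (forall i x, x \in Q i -> x \in S /\ g x = Some i) ->
  \sum_i u i (Q i) <= or_val u S.
Proof.
move: k u hu Q g; case => [|k] u hu Q g H.
  by rewrite big_ord0 or_val_ge0.
pose P : {ffun X -> 'I_k.+1} := [ffun x => odflt ord0 (g x)].
apply: (le_trans _ (or_val_ge u S P)).
apply: ler_sum => i _.
have [_ _ mono] := hu i; apply: mono.
apply/subsetP => x /H [xS gx]; by rewrite !inE xS ffunE gx /=.
Qed.
End H.

Theorem theorem12 (R : realFieldType) (X : finType) (k : nat)
  (u : 'I_k -> {set X} -> R) (v v1 v2 : {set X} -> R)
  (hu : forall i, is_valuation (u i)) (hv : is_valuation v)
  (hv1 : is_valuation v1) (hv2 : is_valuation v2)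
  (hsub : submodular (or_val u))
  (a : alloc X ('I_k + bool)%type)
  (ha : vcg_optimal (falsename_profile u v1 v2) a)
  (b : alloc X (option 'I_k))
  (hb : vcg_optimal (truthful_profile u v) b) :
  v (bundle a (inr false) :|: bundle a (inr true))
    - vcg_payment (falsename_profile u v1 v2) a (inr false)
    - vcg_payment (falsename_profile u v1 v2) a (inr true)
  <= v (bundle b None) - vcg_payment (truthful_profile u v) b None.
Proof.
set fp := falsename_profile u v1 v2.
set tp := truthful_profile u v.
set S1 := bundle a (inr false); set S2 := bundle a (inr true).
set T := S1 :|: S2.
set U := or_val u.
set w := \sum_j u j (bundle a (inl j)).
have hw : w <= U (~: T).
  apply: (sum_le_or_val hu (g := fun x => match a x with inl j => Some j | inr _ => None end)).
  move=> i x; rewrite /bundle !inE => /eqP ->; split => //.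
have hvb : forall b', is_valuation (fp (inr b')) by case.
have sumfp : forall (bb : bool) (c : alloc X ('I_k + bool)%type),
    \sum_(j | j != inr bb) fp j (bundle c j)
    = \sum_i u i (bundle c (inl i)) + fp (inr (~~bb)) (bundle c (inr (~~bb))).
  move=> bb c; rewrite big_sumType /=; congr (_ + _).
  exact: (sum_bool_ne _ bb (fun i => fp (inr i) (bundle c (inr i)))).
have pay : forall bb : bool,
    U (~: bundle a (inr (~~bb))) - w <= vcg_payment fp a (inr bb).
  move=> bb.
  have neqb : (inr (~~bb) : ('I_k + bool)%type) != inr bb by case: bb.
  rewrite /vcg_payment sumfp.
  set S' := bundle a (inr (~~bb)).
  set M := \big[Num.max/0]_(c | _) _.
  rewrite (_ : \sum_i u i (bundle a (inl i)) = w) //.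
  suff : U (~: S') <= M - fp (inr (~~bb)) S' by lra.
  have [hv0 hvnn hvmono] := hvb (~~bb).
  apply/bigmax_leP; split.
    pose c0 : alloc X ('I_k + bool)%type := [ffun => inr (~~bb)].
    have hc0 : [forall x, c0 x != inr bb].
      by apply/forallP => x; rewrite ffunE.
    have := le_bigmax_cond 0 (P := fun c : alloc X ('I_k + bool)%type => [forall x, c x != inr bb]) (fun c : alloc X ('I_k + bool)%type =>
        \sum_(j | j != inr bb) fp j (bundle c j)) hc0.
    rewrite -/M sumfp.
    have -> : bundle c0 (inr (~~bb)) = setT by apply/setP => x; rewrite !inE /c0 ffunE eqxx.
    have h1 : 0 <= \sum_i u i (bundle c0 (inl i)).
      by apply: sumr_ge0 => i _; have [_ ? _] := hu i.
    have h2 : fp (inr (~~bb)) S' <= fp (inr (~~bb)) setT by apply: hvmono; apply: subsetT.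
    lra.
  move=> P _.
  pose c : alloc X ('I_k + bool)%type :=
    [ffun x => if x \in S' then inr (~~bb) else inl (P x)].
  have hc : [forall x, c x != inr bb].
    by apply/forallP => x; rewrite /c ffunE; case: ifP.
  have := le_bigmax_cond 0 (P := fun c : alloc X ('I_k + bool)%type => [forall x, c x != inr bb]) (fun c : alloc X ('I_k + bool)%type =>
      \sum_(j | j != inr bb) fp j (bundle c j)) hc.
  rewrite -/M sumfp.
  have -> : bundle c (inr (~~bb)) = S'.
    apply/setP => x; rewrite !inE /c ffunE /S' /bundle ?inE. by case: ifP => _; rewrite ?eqxx.
  have -> : \sum_i u i (bundle c (inl i)) = \sum_i u i [set x in ~: S' | P x == i].
    apply: eq_bigr => i _; congr (u i); apply/setP => x; rewrite !inE /c ffunE /S' /bundle ?inE.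
    by case: ifP => _ /=.
  lra.
have p1 := pay false.
have p2 := pay true.
rewrite /= -/S1 -/S2 in p1 p2.
have disj : ~: S2 :|: ~: S1 = setT.
  apply/setP => x; rewrite !inE /S1 /S2 /bundle ?inE -?negb_and.
  by case: (a x) => // [] [].

have hY : ~: S2 :&: ~: S1 = ~: T by rewrite /T setCU setIC.
have hs := hsub (~: S2) (~: S1).
rewrite disj hY in hs.
have sumtp : forall c : alloc X (option 'I_k),
    \sum_(j | j != None) tp j (bundle c j) = \sum_i u i (bundle c (Some i)).
  by move=> c; rewrite sum_option /= add0r.
have welf : forall c : alloc X (option 'I_k),
    welfare tp c = v (bundle c None) + \sum_i u i (bundle c (Some i)).
  by move=> c; rewrite /welfare sum_option /=.
have Mt : \big[Num.max/0]_(c : alloc X (option 'I_k) | [forall x, c x != None])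
      (\sum_(j | j != None) tp j (bundle c j)) <= U setT.
  apply/bigmax_leP; split; first exact: or_val_ge0.
  move=> c _; rewrite sumtp.
  apply: (sum_le_or_val hu (g := fun x => c x)).
  by move=> i x; rewrite /bundle !inE => /eqP.
have Wt : v T + U (~: T) <= welfare tp b.
  suff : U (~: T) <= welfare tp b - v T by lra.
  have [hv0 hvnn hvmono] := hv.
  apply/bigmax_leP; split.
    pose c0 : alloc X (option 'I_k) := [ffun => None].
    have := hb c0; rewrite (welf c0).
    have -> : bundle c0 None = setT by apply/setP => x; rewrite !inE /c0 ffunE.
    have h1 : 0 <= \sum_i u i (bundle c0 (Some i)).
      by apply: sumr_ge0 => i _; have [_ ? _] := hu i.
    have h2 : v T <= v setT by apply: hvmono; apply: subsetT.
    lra.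
  move=> P _.
  pose c : alloc X (option 'I_k) :=
    [ffun x => if x \in T then None else Some (P x)].
  have := hb c; rewrite (welf c).
  have -> : bundle c None = T.
    by apply/setP => x; rewrite /bundle in_set /c ffunE; case: ifP => _; rewrite ?eqxx.
  have -> : \sum_i u i (bundle c (Some i)) = \sum_i u i [set x in ~: T | P x == i].
    apply: eq_bigr => i _; congr (u i); apply/setP => x; rewrite /bundle !in_set /c ffunE.
    by case: ifP; rewrite /T /S1 /S2 /bundle !inE => -> /=.
  lra.
move: Mt Wt; rewrite welf.
set Mb := \big[Num.max/0]_(c | _) _.
have -> : vcg_payment tp b None = Mb - \sum_i u i (bundle b (Some i)).
  by rewrite /vcg_payment sumtp.
rewrite -/U in hs.
lra.
Qed.
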